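(* Let $G$ be a finite permutation group on a set $\Omega$ and let $A$ be an abelian regular subgroup of $G$ which is a maximal subgroup of $G$ and satisfies $N_G(A)=A$. Fix a point $1\in\Omega$, let $G_1$ be its stabilizer, for $s\in G$ let $G_s=s^{-1}G_1s$ denote the stabilizer of the point $1^s$, and let $N=\bigcap_{g\in G}A^g$ be the core of $A$ in $G$. Then there exist a prime $p$ and subgroups $Q\neq 1$ and $S\neq 1$ of $G$ such that: (1) $A/N$ is cyclic of order coprime to $p$; (2) $G_1$ is an elementary abelian $p$-group; (3) $G/N\cong (G_1N/N)\rtimes(A/N)$, and $G/N$ acts faithfully as an affine primitive group on the right cosets of $A$ in $G$; (4) $N=Z(G)=Q\times C_S(G_1)$; (5) $G=(G_1\times Q)\rtimes S$; (6) $A=Q\times S$; (7) $G_1\times Q$ is the unique Sylow $p$-subgroup of $G$; (8) $N_G(G_1)=C_G(G_1)=G_1\times N$; (9) for all $s,s'\in G\setminus N_G(G_1)$ we have $G_1G_s=G_1G_{s'}$.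
   Context: All groups are finite. A subgroup $A$ of a permutation group $G$ on $\Omega$ is regular if it acts transitively on $\Omega$ with trivial point-stabilizers. $Z(G)$ is the center, $C_X(Y)$ the centralizer and $N_X(Y)$ the normalizer of $Y$ in $X$. *)

(* Defs.v *)
From mathcomp Require Import all_boot all_fingroup all_solvable.
Set Implicit Arguments. Unset Strict Implicit. Unset Printing Implicit Defensive.

(* Main.v *)
Require Import Defs.
From mathcomp Require Import all_boot all_fingroup all_solvable.
From mathcomp Require Import ssralg zmodp matrix mxalgebra mxrepresentation mxabelem.
Set Implicit Arguments. Unset Strict Implicit. Unset Printing Implicit Defensive.
Import GroupScope.

Theorem theorem3p2 (T : finType) (G A G1 N : {group {perm T}}) (x0 : T)
  (sAG : A \subset G) (abA : abelian A)
  (trA : [transitive A, on [set: T] | 'P])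
  (regA : forall x : T, 'C_A[x | 'P] = 1)
  (maxA : maximal A G)
  (selfnA : 'N_G(A) = A)
  (defG1 : G1 :=: 'C_G[x0 | 'P])
  (defN : N :=: gcore A G) :
  exists p : nat, exists Q S : {group {perm T}},
  [/\ prime p, Q :!=: 1 /\ S :!=: 1, Q \subset G, S \subset G &
  [/\ (* (1) *) cyclic (A / N) /\ coprime #|A / N| p,
      (* (2) *) p.-abelem G1,
      (* (3) *) [/\ ((G1 <*> N) / N) ><| (A / N) = G / N,
                   [faithful G / N, on rcosets (A / N) (G / N) | 'Rs],
                   [primitive G / N, on rcosets (A / N) (G / N) | 'Rs]
                 & [/\ p.-abelem ((G1 <*> N) / N), (G1 <*> N) / N <| G / N,
                       [transitive (G1 <*> N) / N, on rcosets (A / N) (G / N) | 'Rs]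
                     & forall X, X \in rcosets (A / N) (G / N) ->
                         'C_((G1 <*> N) / N)[X | 'Rs] = 1]],
      (* (4) *) N :=: 'Z(G) /\ Q \x 'C_S(G1) = N &
   [/\ (* (5) *) G1 \x Q = G1 <*> Q /\ (G1 <*> Q) ><| S = G,
      (* (6) *) Q \x S = A,
      (* (7) *) 'Syl_p(G) = [set (G1 <*> Q)%G],
      (* (8) *) 'N_G(G1) = 'C_G(G1) /\ G1 \x N = 'C_G(G1) &
      (* (9) *) forall s s', s \in G :\: 'N_G(G1) -> s' \in G :\: 'N_G(G1) ->
                  G1 * (G1 :^ s) = G1 * (G1 :^ s')]]].
Proof.
have nsNG : N <| G by rewrite defN gcore_normal.
have sNA : N \subset A by rewrite defN gcore_sub.
have sNG : N \subset G := subset_trans sNA sAG.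
have sG1G : G1 \subset G by rewrite defG1 subsetIl.
have tiG1A : G1 :&: A = 1.
  apply/trivgP/subsetP => g /setIP[]; rewrite defG1 => /setIP[_ cg] Ag.
  by rewrite -(regA x0) inE Ag cg.
have defG1A : G1 * A = G.
  apply/eqP; rewrite eqEsubset mul_subG //=; apply/subsetP=> g Gg.
  have [a Aa eqa] := atransP2 trA (in_setT x0) (in_setT (aperm x0 g)).
  have Ga : a \in G := subsetP sAG a Aa.
  rewrite -(mulgKV a g) mem_mulg // defG1 inE groupM ?groupV //=.
  by apply/astab1P; move: eqa; rewrite /= !apermE => eqa; rewrite permM eqa -permM mulgV perm1.
have cardG : #|G| = (#|G1| * #|A|)%N by rewrite -defG1A TI_cardMg.
have prA : A \proper G := maxgroupp maxA.
have ntG1 : G1 :!=: 1.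
  apply: contraTneq prA => G1_1; rewrite properEcard sAG /= cardG G1_1 cards1 mul1n ltnn //.
have maxAP : forall H : {group {perm T}}, A \subset H -> H \subset G -> H :=: A \/ H :=: G.
  move=> H sAH sHG; have [->|prH] := eqVproper sHG; [by right|left].
  by case/maxgroupP: maxA => _ /(_ H prH sAH).
have nnA : ~~ (G \subset 'N(A)).
  apply: contraTN prA => nAG; have eqA : A :=: G by rewrite -selfnA (setIidPl nAG).
  by rewrite eqA properE subxx.
have corefree : forall H : {group {perm T}}, H \subset G1 -> G \subset 'N(H) -> H :=: 1.
  move=> H sHG1 nHG; apply/trivgP/subsetP => h Hh; rewrite inE; apply/eqP/permP => y.
  rewrite perm1; have [a Aa ->] := atransP2 trA (in_setT x0) (in_setT y); rewrite /= apermE.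
  have Ga : a \in G := subsetP sAG a Aa.
  have : h ^ a^-1 \in G1 by rewrite (subsetP sHG1) // memJ_norm // (subsetP nHG) ?groupV.
  rewrite defG1 inE => /andP[_ /astab1P]; rewrite /= !apermE conjgE invgK !permM.
  by move/(congr1 a); rewrite -permM mulVg perm1.
have sZA : 'Z(G) \subset A.
  have nZA : A \subset 'N('Z(G)) := subset_trans sAG (normal_norm (center_normal G)).
  have sAY : A \subset 'Z(G) <*> A := joing_subr _ _.
  have sYG : 'Z(G) <*> A \subset G by rewrite join_subG center_sub.
  case: (maxAP _ sAY sYG) => [<-|defY]; first exact: joing_subl.
  case/negP: nnA; rewrite -defY join_subG normG andbT.
  apply: subset_trans (cent_sub A); exact: subset_trans (subsetIr G _) (centS sAG).
have cent1A : forall a, a \in A -> a \notin 'Z(G) -> 'C_G[a] = A.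
  move=> a Aa nZa; have sAC : A \subset 'C_G[a].
    by rewrite subsetI sAG sub_cent1 (subsetP abA).
  case: (maxAP _ sAC (subsetIl _ _)) => // defC; case/negP: nZa.
  by rewrite inE (subsetP sAG) //= -sub_cent1 -defC subsetIr.
have nZG : G \subset 'N('Z(G)) := normal_norm (center_normal G).
have defNZ : N :=: 'Z(G).
  apply/eqP; rewrite eqEsubset andbC.
  rewrite {1}defN sub_gcore // sZA /=.
  apply/subsetP => n Nn; apply: contraR nnA => nZn.
  have An := subsetP sNA n Nn.
  apply/subsetP => g Gg; apply/normP.
  have Ang : n ^ g \in A by rewrite (subsetP sNA) // memJ_norm // (subsetP (normal_norm nsNG)).
  have nZng : n ^ g \notin 'Z(G) by rewrite memJ_norm // (subsetP nZG).
  have e1 := cent1A n An nZn; have e2 := cent1A _ Ang nZng.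
  by rewrite -{1}e1 -e2 cent1J conjIg conjGid.
have nTI : forall a g, a \in A -> a \notin N -> g \in G -> a ^ g \in A -> g \in A.
  move=> a g Aa nNa Gg Aag; rewrite -selfnA inE Gg; apply/normP.
  rewrite defNZ in nNa.
  have nZag : a ^ g \notin 'Z(G) by rewrite memJ_norm // (subsetP nZG).
  have e1 := cent1A a Aa nNa; have e2 := cent1A _ Aag nZag.
  by rewrite -{1}e1 -e2 cent1J conjIg conjGid.
have nNG : G \subset 'N(N) := normal_norm nsNG.
have tiG1N : G1 :&: N = 1 by apply/trivgP; rewrite -tiG1A setIS.
have nNG1 : G1 \subset 'N(N) := subset_trans sG1G nNG.
pose K := (G1 <*> N)%G.
have defK : K :=: G1 * N by rewrite /K /= norm_joinEl.
have cardK : #|K| = (#|G1| * #|N|)%N by rewrite defK TI_cardMg.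
have sKG : K \subset G by rewrite join_subG sG1G.
have sNK : N \subset K := joing_subr _ _.
have sG1K : G1 \subset K := joing_subl _ _.
have iGA : #|G : A| = #|G1|.
  apply/eqP; rewrite -(eqn_pmul2l (cardG_gt0 A)) (Lagrange sAG) cardG mulnC //.
have ntAN : A :\: N != set0.
  apply: contraNneq nnA => /eqP; rewrite setD_eq0 => sAN.
  have eAN : A :=: N by apply/eqP; rewrite eqEsubset sAN.
  by rewrite eAN.
have TI : normedTI (A :\: N) G A.
  apply/normedTI_memJ_P; split=> // a g /setDP[Aa nNa] Gg.
  apply/idP/idP => [/setDP[Aag _]| Ag]; first exact: nTI a g Aa nNa Gg Aag.
  by rewrite inE memJ_norm ?(subsetP nNG) // nNa memJ_norm // (subsetP (cent_sub A)) // (subsetP abA).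
have cardX := card_support_normedTI TI.
set X := class_support _ _ in cardX.
have sXG : X \subset G by rewrite class_support_sub_norm // subDset subsetU // sAG orbT.
have tiKX : K :&: X = set0.
  apply/setP => x; rewrite !inE; apply/negP => /andP[]; rewrite defK => /mulsgP[h n G1h Nn ->].
  case/imset2P => b g /setDP[Ab nNb] Gg /(congr1 (conjg^~ g^-1)); rewrite conjgK => eb.
  have Gh := subsetP sG1G h G1h.
  have Ahg : h ^ g^-1 \in A.
    have := Ab; rewrite -eb conjMg groupMr //; apply: (subsetP sNA).
    by rewrite memJ_norm // (subsetP nNG) ?groupV.
  have h1 : h ^ g^-1 = 1.
    suff : h ^ g^-1 \in 'C_A[aperm x0 g^-1 | 'P] by rewrite regA => /set1gP.
    rewrite inE Ahg /=; apply/astab1P.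
    move: G1h; rewrite defG1 inE => /andP[_ /astab1P]; rewrite /= !apermE => hx0.
    by rewrite conjgE invgK !permM permKV hx0.
  have h1' : h = 1 by apply: (conjg_inj g^-1); rewrite h1 conj1g.
  rewrite h1' mul1g in eb.
  by case/negP: nNb; rewrite -eb memJ_norm // (subsetP nNG) ?groupV.
have defKX : K :=: G :\: X.
  apply/eqP; rewrite eqEcard; apply/andP; split.
    by rewrite subsetD sKG /= -setI_eq0 tiKX.
  rewrite cardsDS // cardX cardK iGA cardsDS // cardG.
  rewrite mulnBl (mulnC #|A|) (mulnC #|N|) subKn // leq_mul2l subset_leq_card ?orbT //.
have nsKG : K <| G.
  by rewrite /normal sKG defKX normsD ?normG ?class_support_norm.
have nNA : A \subset 'N(N) := subset_trans sAG nNG.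
have nNK : K \subset 'N(N) := subset_trans sKG nNG.
have defKA : K :&: A = N.
  by rewrite setIC defK -group_modr // (setIC A) tiG1A mul1g.
have defKA_G : K * A = G.
  by rewrite defK -mulgA (mulSGid sNA) -defG1A.
have nsKbGb : K / N <| G / N := quotient_normal N nsKG.
have sAbGb : A / N \subset G / N := quotientS N sAG.
have nKbAb : A / N \subset 'N(K / N) := subset_trans sAbGb (normal_norm nsKbGb).
have tiKbAb : K / N :&: A / N = 1.
  by rewrite -quotientGI // defKA trivg_quotient.
have KbAb : K / N * (A / N) = G / N by rewrite -quotientMl // defKA_G.
have sdpG : (K / N) ><| (A / N) = G / N by rewrite sdprodE.
have nsNA : N <| A by rewrite /normal sNA nNA.
have maxAb : maximal (A / N) (G / N) by rewrite quotient_maximal.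
have abAb : abelian (A / N) := quotient_abelian N abA.
have semireg : semiregular (K / N) (A / N).
  move=> x /setD1P[ntx /morphimP[a Na Aa ex]]; subst x.
  apply/trivgP/subsetP => y /setIP[/morphimP[k Nk Kk ey] /cent1P cky]; subst y.
  rewrite /= in ntx cky *.
  have nNa : a \notin N by apply: contra ntx => Na'; rewrite coset_id.
  have Gk := subsetP sKG k Kk.
  suff : k \in N by move=> Nk'; rewrite coset_id ?inE.
  rewrite -defKA inE Kk; apply: (nTI a k Aa nNa Gk).
  have : coset N (a ^ k) = coset N a by rewrite morphJ // /conjg -cky mulKg.
  move/rcoset_kercosetP; rewrite groupJ // => /(_ isT Na) /rcosetP[n Nn ->].
  by rewrite groupM // (subsetP sNA).
have coKbAb : coprime #|K / N| #|A / N| := regular_norm_coprime nKbAb semireg.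
have defKb : K / N = G1 / N by rewrite quotientYidr.
have isoG1 : G1 \isog G1 / N by rewrite quotient_isog // setIC tiG1N.
have cardKb : #|K / N| = #|G1| by rewrite defKb (card_isog isoG1).
have tool : forall Lb : {group coset_of N}, Lb \subset K / N -> A / N \subset 'N(Lb) ->
    Lb :=: 1 \/ Lb :=: K / N.
  move=> Lb sLK nLA.
  have sLG : Lb \subset G / N := subset_trans sLK (normal_sub nsKbGb).
  have tiLA : Lb :&: A / N = 1 by apply/trivgP; rewrite -tiKbAb setSI.
  have sJG : Lb <*> (A / N) \subset G / N by rewrite join_subG sLG.
  have [eqJ|prJ] := eqVproper sJG.
    right; apply/eqP; rewrite eqEcard sLK /=.
    have cG : (#|K / N| * #|A / N|)%N = #|Lb <*> (A / N)| by rewrite eqJ (sdprod_card sdpG).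
    move: cG; rewrite (norm_joinEr nLA) TI_cardMg //.
    by move/eqP; rewrite eqn_pmul2r ?cardG_gt0 // => /eqP ->.
  left; case/maxgroupP: maxAb => _ /(_ _ prJ (joing_subr _ _)) eqJ.
  by apply/trivgP; rewrite -tiLA subsetI subxx /= -eqJ joing_subl.
have ntKb : K / N != 1 by rewrite -cardG_gt1 cardKb cardG_gt1.
pose p := pdiv #|G1|.
have p_pr : prime p by rewrite pdiv_prime // cardG_gt1.
have p_dvd : p %| #|K / N| by rewrite cardKb pdiv_dvd.
have [Pb sylP nPA] := sol_coprime_Sylow_exists p (abelian_sol abAb) nKbAb coKbAb.
have sPK : Pb \subset K / N := pHall_sub sylP.
have pKb : p.-group (K / N).
  case: (tool Pb sPK nPA) => [P1|<-]; last exact: pHall_pgroup sylP.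
  case/and3P: sylP => _ _; rewrite P1 indexg1 p'natE // p_dvd //.
have abelKb : p.-abelem (K / N).
  rewrite -trivg_Phi //.
  have sPhK : 'Phi(K / N) \subset K / N := Phi_sub _.
  have nPhA : A / N \subset 'N('Phi(K / N)) := char_norm_trans (Phi_char _) nKbAb.
  case: (tool _ sPhK nPhA) => [->|ePh]; first by rewrite eqxx.
  by have := Phi_proper ntKb; rewrite ePh properE subxx.
have abelG1 : p.-abelem G1 by move: abelKb; rewrite defKb -(isog_abelem isoG1).
have cAK1 : 'C_(A / N)(K / N) = 1.
  apply/trivgP/subsetP => x /setIP[Ax cKx]; rewrite inE; apply: contraR ntKb => ntx.
  have := semireg x; rewrite !inE ntx Ax => /(_ isT) cK1.
  by rewrite -cK1 (setIidPl _) // sub_cent1.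
have minKb : minnormal (K / N) (A / N).
  apply/mingroupP; split; first by rewrite ntKb nKbAb.
  move=> H /andP[ntH nHA] sHK; case: (tool H sHK nHA) => // H1.
  by rewrite H1 eqxx in ntH.
have cycAb : cyclic (A / N).
  exact: mx_faithful_irr_abelian_cyclic (abelem_mx_faithful abelKb ntKb nKbAb cAK1)
           ((abelem_mx_irrP abelKb ntKb nKbAb) minKb) abAb.
have coAbp : coprime #|A / N| p.
  by rewrite coprime_sym (coprime_dvdl p_dvd) // coprime_sym ?coKbAb.
have faithG : [faithful G / N, on rcosets (A / N) (G / N) | 'Rs].
  rewrite /faithful astabRs_rcosets subIset //; apply/orP; right.
  set C := gcore _ _.
  have sCA : C \subset A / N := gcore_sub _ _.
  have nsCG : C <| G / N := gcore_normal sAbGb.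
  have sCK : C \subset 'C(K / N).
    apply/commG1P/trivgP; rewrite -tiKbAb setIC.
    apply: subset_trans (@commg_subI _ C (K / N) (gcore (A / N) (G / N))%G (K / N)%G _ _) _.
    - by rewrite subsetI subxx (subset_trans sCA nKbAb).
    - by rewrite subsetI subxx (subset_trans (normal_sub nsKbGb) (normal_norm nsCG)).
    apply/subsetP => z; rewrite !inE => /andP[z1 z2].
    by rewrite ?z1 ?z2 ?(subsetP sCA z z1) ?(subsetP sCA z z2).
  by rewrite -cAK1 subsetI sCA.
have primG : [primitive G / N, on rcosets (A / N) (G / N) | 'Rs].
  have Ain : (A / N : {set _}) \in rcosets (A / N) (G / N).
    by rewrite -{1}(rcoset1 (A / N)) mem_rcosets mulSGid.
  rewrite (trans_prim_astab Ain (transRs_rcosets _ _)) astab1Rs (setIidPr sAbGb).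
  by rewrite /maximal_eq maxAb orbT.
have transK : [transitive K / N, on rcosets (A / N) (G / N) | 'Rs].
  have Ain : (A / N : {set _}) \in rcosets (A / N) (G / N).
    by rewrite -{1}(rcoset1 (A / N)) mem_rcosets mulSGid.
  apply/imsetP; exists (A / N : {set _}) => //; apply/setP => Y; apply/idP/idP.
    case/rcosetsP => g Gg ->.
    have : g \in A / N * (K / N) by rewrite (normC nKbAb) KbAb.
    case/mulsgP => a k Aa Kk ->; rewrite rcosetM rcoset_id //.
    by rewrite orbitRs; apply/rcosetsP; exists k.
  rewrite orbitRs; case/rcosetsP => k Kk ->; apply/rcosetsP; exists k => //.
  exact: subsetP (normal_sub nsKbGb) k Kk.
have regK : forall Y, Y \in rcosets (A / N) (G / N) -> 'C_(K / N)[Y | 'Rs] = 1.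
  move=> Y /rcosetsP[g Gg ->].
  apply/trivgP/subsetP => k /setIP[Kk /astab1P /= ek].
  have ek' : (A / N) :* g :* k = (A / N) :* g by rewrite -rcosetE.
  have : g * k \in (A / N) :* g by rewrite -ek' -rcosetM rcoset_refl.
  case/rcosetP => a Aa egk.
  have Gk : k \in G / N := subsetP (normal_sub nsKbGb) k Kk.
  have : k ^ g^-1 \in K / N :&: A / N.
    rewrite inE memJ_norm ?Kk ?groupV ?(subsetP (normal_norm nsKbGb)) //=.
    by rewrite conjgE invgK mulgA egk mulgK.
  rewrite tiKbAb => /set1gP /(congr1 (conjg^~ g)); rewrite conjgKV conj1g => ->.
  exact: group1.
pose Q := 'O_p(A)%G; pose S := 'O_p^'(A)%G.
have QS : Q \x S = A := nilpotent_pcoreC p (abelian_nil abA).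
have pQ : p.-group Q := pcore_pgroup _ _.
have p'S : p^'.-group S := pcore_pgroup _ _.
have sQA : Q \subset A := pcore_sub _ _.
have sSA : S \subset A := pcore_sub _ _.
have [_ QSA cSQ tiQS] := dprodP QS.
have sQN : Q \subset N.
  rewrite -(quotient_sub1 (subset_trans sQA nNA)).
  have p'Ab : p^'.-group (A / N) by rewrite /pgroup p'natE // -prime_coprime // coprime_sym.
  have := pnat_1 (quotient_pgroup N pQ) (pgroupS (quotientS N sQA) p'Ab).
  by move/eqP; rewrite -trivg_card1 => /eqP ->.
have cNG : N \subset 'C(G) by rewrite defNZ subsetIr.
have cQG : Q \subset 'C(G) := subset_trans sQN cNG.
have cQG1 : Q \subset 'C(G1) := subset_trans cQG (centS sG1G).
have nQG1 : G1 \subset 'N(Q) by rewrite (subset_trans _ (cent_sub Q)) // centsC.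
have tiG1Q : G1 :&: Q = 1 by apply/trivgP; rewrite -tiG1A setIS.
pose K1 := (G1 <*> Q)%G.
have defK1 : K1 :=: G1 * Q by rewrite /K1 /= norm_joinEl.
have dpK1 : G1 \x Q = G1 <*> Q := dprodEY cQG1 tiG1Q.
have abG1 : abelian G1 := abelem_abelian abelG1.
have abQ : abelian Q := abelianS sQA abA.
have abK1 : abelian K1 by rewrite /K1 /= abelianY abG1 abQ cQG1.
have pG1 : p.-group G1 := abelem_pgroup abelG1.
have pK1 : p.-group K1 by rewrite /K1 /= defK1 pgroupM pG1.
have sK1G : K1 \subset G by rewrite join_subG sG1G (subset_trans sQA sAG).
have sK1K : K1 \subset K by rewrite join_subG sG1K (subset_trans sQN sNK).
have cardK1 : #|K1| = (#|G1| * #|Q|)%N by rewrite defK1 TI_cardMg.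
have cardA : #|A| = (#|Q| * #|S|)%N := esym (dprod_card QS).
have sylK1 : p.-Sylow(G) K1.
  rewrite /pHall sK1G pK1 -divgS // cardG cardA cardK1 mulnA mulKn //.
  by rewrite muln_gt0 !cardG_gt0.
have nsK1K : K1 <| K.
  rewrite /normal sK1K join_subG (subset_trans (joing_subl G1 Q) (normG K1)) /=.
  exact: subset_trans (subset_trans cNG (centS sK1G)) (cent_sub K1).
have nsK1G : K1 <| G.
  have eK1 : 'O_p(K) = K1 := normal_Hall_pcore (pHall_subl sK1K sKG sylK1) nsK1K.
  by rewrite -eK1; apply: char_normal_trans (pcore_char _ _) nsKG.
have coK1S : coprime #|K1| #|S| := pnat_coprime pK1 p'S.
have nK1S : S \subset 'N(K1) := subset_trans (subset_trans sSA sAG) (normal_norm nsK1G).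
have sdpK1 : (G1 <*> Q) ><| S = G.
  have -> : G1 <*> Q = K1 by [].
  by rewrite sdprodE ?coprime_TIg // -defG1A -QSA mulgA -defK1.
have SylK1 : 'Syl_p(G) = [set K1].
  have : #|'Syl_p(G)| == 1%N.
    by rewrite (card_Syl sylK1) (setIidPl (normal_norm nsK1G)) indexgg.
  case/cards1P => P defS; have : K1 \in 'Syl_p(G) by rewrite inE sylK1.
  by rewrite defS => /set1P <-.
have cSA : S \subset 'C(A) := subset_trans sSA abA.
have defCS : 'C_S(G1) = S :&: N.
  apply/eqP; rewrite eqEsubset; apply/andP; split.
    apply/subsetP => s /setIP[Ss cs]; rewrite inE Ss defNZ inE.
    rewrite (subsetP (subset_trans sSA sAG)) //= -sub_cent1 -defG1A mul_subG //.
      by rewrite sub_cent1.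
    by rewrite sub_cent1 (subsetP cSA).
  by rewrite setIS // (subset_trans cNG (centS sG1G)).
have dpN : Q \x 'C_S(G1) = N.
  rewrite defCS dprodE ?(subset_trans (subsetIl S N) cSQ) //.
    by rewrite group_modl // QSA (setIidPr sNA).
  by apply/trivgP; rewrite -tiQS setIS ?subsetIl.
pose W := [~: K1, S]%G.
have nWK1 : K1 \subset 'N(W) := commg_norml _ _.
have nWS : S \subset 'N(W) := commg_normr _ _.
have nWG : G \subset 'N(W).
  by rewrite -(sdprodW sdpK1) mul_subG.
have sWK1 : W \subset K1 by rewrite commg_subl.
have cQS : Q \subset 'C(S) := subset_trans sQA (centsS sSA abA).
have tiWQ : W :&: Q = 1.
  apply/trivgP; rewrite -(coprime_abel_cent_TI nK1S coK1S abK1).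
  by rewrite setIS.
have leW : #|W| <= #|G1|.
  have sWQ : W * Q \subset K1 by rewrite mul_subG // defK1 mulG_subr.
  have := subset_leq_card sWQ; rewrite TI_cardMg // cardK1.
  by rewrite leq_pmul2r ?cardG_gt0.
have fpf : forall a, a \in A -> a \notin N -> [set [~ g, a] | g in G1] = W /\ #|W| = #|G1|.
  move=> a Aa nNa.
  have caA : 'C_G[a] = A by apply: cent1A; rewrite // -defNZ.
  have sIW : [set [~ g, a] | g in G1] \subset W.
    apply/subsetP => _ /imsetP[g G1g ->].
    move: Aa; rewrite -QSA => /mulsgP[q s Qq Ss ->].
    have cgq : [~ g, q] = 1.
      have c := centsP cQG1 q Qq g G1g.
      by apply/eqP/commgP; first [exact: c | exact: esym c].
    rewrite commgMJ cgq conj1g mulg1; apply: mem_commg => //.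
    by rewrite (subsetP (joing_subl G1 Q)).
  have inj : {in G1 &, injective (fun g => [~ g, a])}.
    move=> g h G1g G1h /= E.
    have E' : h ^ a = h * (g^-1 * g ^ a) by rewrite -commgEl E commgEl mulKVg.
    have chg : h * g^-1 \in G1 :&: A.
      rewrite inE groupM ?groupV //= -caA inE groupM ?groupV ?(subsetP sG1G) //=.
      apply/cent1P/commgP/conjg_fixP.
      by rewrite conjMg conjVg E' mulgA mulgK.
    by move: chg; rewrite tiG1A => /set1gP /eqP; rewrite mulg_eq1 ?invgK => /eqP ->.
  have cI : #|[set [~ g, a] | g in G1]| = #|G1| by rewrite (card_in_imset inj).
  have eI : [set [~ g, a] | g in G1] = W by apply/eqP; rewrite eqEcard sIW cI.
  by split; rewrite -?eI.
have defNG1 : 'N_G(G1) = G1 * N.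
  have sG1NC : G1 * N \subset 'C_G(G1).
    by rewrite subsetI !mul_subG // (subset_trans cNG (centS sG1G)).
  apply/eqP; rewrite eqEsubset andbC (subset_trans sG1NC) ?setIS ?cent_sub //=.
  apply/subsetP => x /setIP[Gx nx]; move: Gx; rewrite -defG1A => /mulsgP[g a G1g Aa ex].
  have na : a \in 'N(G1).
    have -> : a = g^-1 * x by rewrite ex mulKg.
    by rewrite groupM ?groupV // (subsetP (normG G1)).
  case Na : (a \in N); first by rewrite ex mem_mulg.
  have [eW cW] := fpf a Aa (negbT Na).
  have sWG1 : W \subset G1.
    rewrite -eW; apply/subsetP => _ /imsetP[h G1h ->].
    by rewrite commgEl groupM ?groupV // memJ_norm.
  have eWG1 : W :=: G1.
    by apply/eqP; rewrite eqEcard sWG1 cW leqnn.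
  have nG1G : G \subset 'N(G1) by rewrite -eWG1.
  by rewrite (corefree G1 (subxx _) nG1G) eqxx in ntG1.
have eCG1 : 'C_G(G1) = G1 * N.
  apply/eqP; rewrite eqEsubset -{1}defNG1 setIS ?cent_sub //=.
  by rewrite subsetI !mul_subG // (subset_trans cNG (centS sG1G)).
have dpG1N : G1 \x N = 'C_G(G1).
  by rewrite eCG1 dprodE // (subset_trans cNG (centS sG1G)).
have G1W : forall s, s \in G :\: 'N_G(G1) -> G1 * (G1 :^ s) = G1 * W.
  move=> s /setDP[Gs nNs]; move: (Gs); rewrite -defG1A => /mulsgP[g a G1g Aa es].
  have nNa : a \notin N.
    by apply: contra nNs => Na; rewrite defNG1 es mem_mulg.
  have eJ : G1 :^ s = G1 :^ a by rewrite es conjsgM conjGid.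
  have [eW _] := fpf a Aa nNa.
  rewrite eJ -eW; apply/setP => x; apply/idP/idP => /mulsgP[y z G1y Hz ->].
    case/imsetP: Hz => w G1w ->.
    rewrite (_ : y * w ^ a = (y * w) * [~ w, a]); last by rewrite conjg_mulR mulgA.
    by rewrite mem_mulg ?groupM //; apply/imsetP; exists w.
  case/imsetP: Hz => w G1w ->.
  rewrite (_ : y * [~ w, a] = (y * w^-1) * w ^ a); last by rewrite conjg_mulR [RHS]mulgA mulgKV.
  by apply: mem_mulg; [rewrite groupM ?groupV | rewrite memJ_conjg].
exists p, Q, S; split.
- exact: p_pr.
- split.
    apply/eqP => Q1.
    have eK1 : K1 :=: G1 by rewrite /K1 /= Q1 joingG1.
    have nG1G : G \subset 'N(G1) by rewrite -eK1 normal_norm.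
    by rewrite (corefree G1 (subxx _) nG1G) eqxx in ntG1.
  apply/eqP => S1; case/negP: nnA.
  have eAN : A :=: N.
    by apply/eqP; rewrite eqEsubset sNA andbT -QSA S1 mulg1.
  by rewrite eAN.
- exact: subset_trans sQA sAG.
- exact: subset_trans sSA sAG.
split.
- by split.
- exact: abelG1.
- by split.
- by split.
split.
- by split.
- exact: QS.
- exact: SylK1.
- by split; [rewrite eCG1 defNG1 | exact: dpG1N].
move=> s s' Ss Ss'; by rewrite !G1W.
Qed.
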